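(* Let $X$, $Y$, $Y'$ be nonempty sets, let $F\colon X^*\to Y$ be a preassociative standard function and let $g\colon Y\to Y'$ be a function such that $g|_{\mathrm{ran}(F^{\flat})}$ is one-to-one. Let $\mathbf{a}\in Y'\setminus\mathrm{ran}(g|_{\mathrm{ran}(F^{\flat})})$ and define $H\colon X^*\to Y'$ by $H(\varepsilon)=\mathbf{a}$ and $H^{\flat}=g\circ F^{\flat}$. Then $H$ is standard and preassociative.
   Context: For a nonempty set $X$, $X^*=\bigcup_{n\geqslant 0}X^n$ is the set of all finite tuples over $X$, with $X^0=\{\varepsilon\}$, $\varepsilon$ the empty tuple. For tuples $\mathbf{x},\mathbf{y}$, $F(\mathbf{x},\mathbf{y})$ denotes $F$ applied to the concatenation (concatenation with $\varepsilon$ leaves a tuple unchanged). For $F\colon X^*\to Y$, $F^{\flat}=F|_{X^*\setminus\{\varepsilon\}}$. $F$ is standard if $F(\mathbf{x})=F(\varepsilon)$ holds only if $\mathbf{x}=\varepsilon$. $F$ is preassociative if for all $\mathbf{x},\mathbf{y},\mathbf{y}',\mathbf{z}\in X^*$, $F(\mathbf{y})=F(\mathbf{y}')$ implies $F(\mathbf{x},\mathbf{y},\mathbf{z})=F(\mathbf{x},\mathbf{y}',\mathbf{z})$. *)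

(* Defs.v *)
(* Tuples over X are modelled as lists: X^* = list X,
   the empty tuple epsilon = nil, concatenation = app. *)
From Stdlib Require Import List.
Import ListNotations.

Definition standard {X Y : Type} (F : list X -> Y) : Prop :=
  forall x : list X, F x = F [] -> x = [].

Definition preassociative {X Y : Type} (F : list X -> Y) : Prop :=
  forall x y y' z : list X, F y = F y' -> F (x ++ y ++ z) = F (x ++ y' ++ z).

(* range of F^flat = F restricted to nonempty tuples *)
Definition ran_flat {X Y : Type} (F : list X -> Y) (y : Y) : Prop :=
  exists x : list X, x <> [] /\ F x = y.

(* Main.v *)
Require Import Defs.
From Stdlib Require Import List.
Import ListNotations.

Theorem proposition3p5 (X Y Y' : Type)
  (hX : inhabited X) (hY : inhabited Y) (hY' : inhabited Y')
  (F : list X -> Y) (g : Y -> Y')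
  (HFstd : standard F) (HFpre : preassociative F)
  (Hginj : forall y1 y2 : Y, ran_flat F y1 -> ran_flat F y2 -> g y1 = g y2 -> y1 = y2)
  (a : Y') (Ha : ~ (exists y : Y, ran_flat F y /\ g y = a))
  (H : list X -> Y')
  (HH0 : H [] = a) (HHflat : forall x : list X, x <> [] -> H x = g (F x)) :
  standard H /\ preassociative H.
Proof.
  assert (Hne : forall l y z : list X, y <> [] -> l ++ y ++ z <> []).
  { intros l y z Hy E. apply Hy. destruct l; simpl in E; [|discriminate].
    destruct y; [reflexivity|discriminate]. }
  split.
  - intros x E. destruct x as [|u x]; [reflexivity|exfalso].
    apply Ha. exists (F (u :: x)). split.
    + exists (u :: x). split; [discriminate|reflexivity].
    + rewrite <- HHflat by discriminate. rewrite E. exact HH0.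
  - intros x y y' z E.
    destruct y as [|u y]; destruct y' as [|u' y'].
    + reflexivity.
    + exfalso. apply Ha. exists (F (u' :: y')). split.
      * exists (u' :: y'). split; [discriminate|reflexivity].
      * rewrite <- HHflat by discriminate. rewrite <- E. exact HH0.
    + exfalso. apply Ha. exists (F (u :: y)). split.
      * exists (u :: y). split; [discriminate|reflexivity].
      * rewrite <- HHflat by discriminate. rewrite E. exact HH0.
    + rewrite !HHflat in E by discriminate.
      assert (EF : F (u :: y) = F (u' :: y')).
      { apply Hginj; auto.
        - exists (u :: y). split; [discriminate|reflexivity].
        - exists (u' :: y'). split; [discriminate|reflexivity]. }
      rewrite !HHflat by (apply Hne; discriminate).
      f_equal. apply HFpre. exact EF.
Qed.
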